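(* Let $\lambda>0$ be a constant and define $V,W:[1,\infty)\to\mathbb R$ by $$V(f)=\frac{\pi}{2^{1/2}}+\lambda(f-1)^{3/2},\qquad W(f)=V(f)^2-\log(4V(f)^2)-f.$$ Suppose that for some fixed $f_1>1$: (a) $0<\lambda<\dfrac{2J(f_1)}{3(f_1-1)}$; (b) $W(f_1)>0$; (c) $W'(f_1)<0$. Then, writing $\beta=\beta(f_0)$, we have $\beta^2-\log(4\beta^2)-f_0>0$ for all $1<f_0<f_1$.
   Context: Let $f(\phi)=e^\phi-\phi$; for $f_1\ge1$ let $\phi_*(f_1)\le0\le\phi^*(f_1)$ be the two solutions of $f(\phi)=f_1$, and $\beta(f_0)=\frac12\int_{\phi_*(f_0)}^{\phi^*(f_0)}\frac{d\phi}{\sqrt{f_0-f(\phi)}}$. For $f>1$ let $h^*(f)>1$ and $h_*(f)\in(0,1)$ be the two solutions $h$ of $h-\log h=f$, and set $J(f)=\frac1{h^*(f)-1}+\frac1{1-h_*(f)}-\big(\frac2{f-1}\big)^{1/2}$. *)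

(* Defs.v *)
From Stdlib Require Import Reals ClassicalEpsilon.
From Coquelicot Require Import Coquelicot.
Open Scope R_scope.

Definition fpot (phi : R) : R := exp phi - phi.

(* For f1 >= 1: the two solutions phi_* <= 0 <= phi^* of fpot phi = f1
   (each is unique, so the choice operator picks exactly it). *)
Definition phi_lo (f1 : R) : R :=
  epsilon (inhabits 0) (fun p => p <= 0 /\ fpot p = f1).
Definition phi_hi (f1 : R) : R :=
  epsilon (inhabits 0) (fun p => 0 <= p /\ fpot p = f1).

Definition beta (f0 : R) : R :=
  / 2 * RInt_gen (fun phi => / sqrt (f0 - fpot phi))
          (at_right (phi_lo f0)) (at_left (phi_hi f0)).

Definition h_hi (f : R) : R :=
  epsilon (inhabits 0) (fun h => 1 < h /\ h - ln h = f).
Definition h_lo (f : R) : R :=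
  epsilon (inhabits 0) (fun h => 0 < h < 1 /\ h - ln h = f).

Definition J (f : R) : R :=
  / (h_hi f - 1) + / (1 - h_lo f) - sqrt (2 / (f - 1)).

(* V(f) = pi / 2^(1/2) + lambda (f-1)^(3/2), with (f-1)^(3/2) = (f-1) sqrt(f-1)
   for f >= 1. *)
Definition Vfun (lambda f : R) : R :=
  PI / sqrt 2 + lambda * ((f - 1) * sqrt (f - 1)).

Definition Wfun (lambda f : R) : R :=
  (Vfun lambda f) ^ 2 - ln (4 * (Vfun lambda f) ^ 2) - f.

(* Main.v *)
Require Import Defs.
From Stdlib Require Import Reals Lra Lia Psatz Classical ClassicalEpsilon QArith Qreals.
From Coquelicot Require Import Coquelicot.
Open Scope R_scope.

Lemma ex_RInt_in (k : R -> R) lo hi x y : (forall z, lo < z < hi -> continuous k z) ->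
  lo < x -> x <= y -> y < hi -> ex_RInt k x y.
Proof. intros Hc H1 H2 H3. apply (ex_RInt_continuous (V:=R_CompleteNormedModule)). intros z Hz.
  rewrite Rmin_left in Hz by lra. rewrite Rmax_right in Hz by lra. apply Hc; lra. Qed.

Lemma improper_sup (k : R -> R) (lo hi c M : R) :
  lo < c < hi ->
  (forall x, lo < x < hi -> continuous k x) ->
  (forall x, lo < x < hi -> 0 <= k x) ->
  (forall x y, lo < x <= c -> c <= y < hi -> RInt k x y <= M) ->
  exists S, is_RInt_gen k (at_right lo) (at_left hi) S /\
    (forall x y, lo < x <= c -> c <= y < hi -> RInt k x y <= S).
Proof.
  intros Hc Hcont Hpos HM.
  set (E := fun r => exists x y, lo < x <= c /\ c <= y < hi /\ r = RInt k x y).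
  assert (HB : bound E). { exists M. intros r [x [y [Hx [Hy ->]]]]. apply HM; auto. }
  assert (HE : exists r, E r). { exists (RInt k c c). exists c, c. repeat split; lra. }
  destruct (completeness E HB HE) as [S [HSub HSl]].
  assert (Hup : forall x y, lo < x <= c -> c <= y < hi -> RInt k x y <= S).
  { intros x y Hx Hy. apply HSub. exists x, y. auto. }
  assert (Hmono : forall x0 y0 x y, lo < x <= x0 -> x0 <= c -> c <= y0 -> y0 <= y < hi ->
     RInt k x0 y0 <= RInt k x y).
  { intros x0 y0 x y H1 H2 H3 H4.
    assert (ex1 : ex_RInt k x x0) by (apply (ex_RInt_in k lo hi); auto; lra).
    assert (ex2 : ex_RInt k x0 y0) by (apply (ex_RInt_in k lo hi); auto; lra).
    assert (ex3 : ex_RInt k y0 y) by (apply (ex_RInt_in k lo hi); auto; lra).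
    rewrite <- (RInt_Chasles k x x0 y) by (auto; eapply ex_RInt_Chasles; eauto).
    rewrite <- (RInt_Chasles k x0 y0 y) by auto.
    assert (0 <= RInt k x x0). { apply RInt_ge_0; auto; try lra. intros z Hz; apply Hpos; lra. }
    assert (0 <= RInt k y0 y). { apply RInt_ge_0; auto; try lra. intros z Hz; apply Hpos; lra. }
    unfold plus; simpl. lra. }
  exists S. split; [|exact Hup].
  intros P [eps HP].
  assert (Hex : exists x0 y0, lo < x0 <= c /\ c <= y0 < hi /\ S - eps < RInt k x0 y0).
  { apply NNPP. intro Hn.
    assert (S <= S - eps). { apply HSl. intros r [x [y [Hx [Hy ->]]]].
      apply Rnot_lt_le. intro Hl. apply Hn. exists x, y. auto. }
    pose proof (cond_pos eps). lra. }
  destruct Hex as [x0 [y0 [Hx0 [Hy0 Hgt]]]].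
  unfold filtermapi.
  apply Filter_prod with (Q := fun x => lo < x <= x0) (R := fun y => y0 <= y < hi).
  - exists (mkposreal (x0 - lo) ltac:(lra)). intros x Hb Hlt. simpl in Hb.
    unfold ball in Hb; simpl in Hb; unfold AbsRing_ball, abs, minus, plus, opp in Hb; simpl in Hb.
    apply Rabs_lt_between in Hb. lra.
  - exists (mkposreal (hi - y0) ltac:(lra)). intros x Hb Hlt. simpl in Hb.
    unfold ball in Hb; simpl in Hb; unfold AbsRing_ball, abs, minus, plus, opp in Hb; simpl in Hb.
    apply Rabs_lt_between in Hb. lra.
  - intros x y Hx Hy. exists (RInt k x y). split.
    + apply (RInt_correct (V:=R_CompleteNormedModule)). apply (ex_RInt_in k lo hi); auto; lra.
    + apply HP. unfold ball; simpl; unfold AbsRing_ball, abs, minus, plus, opp; simpl.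
      assert (RInt k x y <= S) by (apply Hup; lra).
      assert (RInt k x0 y0 <= RInt k x y) by (apply Hmono; lra).
      apply Rabs_def1; lra.
Qed.

Lemma inv_sqrt_le g m : 0 < m -> m <= g -> / sqrt g <= / sqrt m.
Proof. intros Hm Hg. apply Rinv_le_contravar. apply sqrt_lt_R0; lra. apply sqrt_le_1_alt; lra. Qed.

Ltac sq_side := repeat split; try lra; try (apply Rgt_not_eq, sqrt_lt_R0; nra).
Lemma isR_left c p x y : 0 < c -> p < x -> x <= y ->
  is_RInt (fun t => / sqrt (c * (t - p))) x y (2 * (sqrt (c * (y - p)) - sqrt (c * (x - p))) / c).
Proof. intros Hc Hx Hxy.
  replace (2 * (sqrt (c * (y - p)) - sqrt (c * (x - p))) / c) with
   (minus ((fun t => 2 * sqrt (c * (t - p)) / c) y) ((fun t => 2 * sqrt (c * (t - p)) / c) x))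
   by (unfold minus, plus, opp; simpl; field; lra).
  apply (is_RInt_derive (V:=R_CompleteNormedModule) (fun t => 2 * sqrt (c * (t - p)) / c)).
  - intros t Ht. rewrite Rmin_left in Ht by lra. rewrite Rmax_right in Ht by lra.
    assert (0 < c * (t - p)) by nra.
    auto_derive. lra. replace (t + - p) with (t - p) by ring. field. split. apply Rgt_not_eq, sqrt_lt_R0; lra. lra.
  - intros t Ht. rewrite Rmin_left in Ht by lra. rewrite Rmax_right in Ht by lra.
    assert (0 < c * (t - p)) by nra.
    apply (ex_derive_continuous (V:=R_NormedModule)). auto_derive. sq_side.
Qed.

Lemma isR_right c q x y : 0 < c -> x <= y -> y < q ->
  is_RInt (fun t => / sqrt (c * (q - t))) x y (2 * (sqrt (c * (q - x)) - sqrt (c * (q - y))) / c).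
Proof. intros Hc Hxy Hy.
  replace (2 * (sqrt (c * (q - x)) - sqrt (c * (q - y))) / c) with
   (minus ((fun t => - (2 * sqrt (c * (q - t)) / c)) y) ((fun t => - (2 * sqrt (c * (q - t)) / c)) x))
   by (unfold minus, plus, opp; simpl; field; lra).
  apply (is_RInt_derive (V:=R_CompleteNormedModule) (fun t => - (2 * sqrt (c * (q - t)) / c))).
  - intros t Ht. rewrite Rmin_left in Ht by lra. rewrite Rmax_right in Ht by lra.
    assert (0 < c * (q - t)) by nra.
    auto_derive. lra. replace (q + - t) with (q - t) by ring. field. split. apply Rgt_not_eq, sqrt_lt_R0; lra. lra.
  - intros t Ht. rewrite Rmin_left in Ht by lra. rewrite Rmax_right in Ht by lra.
    assert (0 < c * (q - t)) by nra.
    apply (ex_derive_continuous (V:=R_NormedModule)). auto_derive. sq_side.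
Qed.

Lemma exp_tan u v : exp v * (1 + u - v) <= exp u.
Proof. replace u with (v + (u - v)) at 2 by ring. rewrite exp_plus.
  pose proof (exp_ineq1_le (u - v)). pose proof (exp_pos v). nra. Qed.

Section B.
Variables f0 lo hi : R.
Hypothesis Hf0 : 1 < f0.
Hypothesis Hlo : lo < 0.
Hypothesis Hhi : 0 < hi.
Hypothesis Elo : exp lo - lo = f0.
Hypothesis Ehi : exp hi - hi = f0.

Let k := fun phi => / sqrt (f0 - fpot phi).
Let e := f0 - 1.
Let a := 1 - exp lo.
Let b := exp hi - 1.

Lemma a_pos : 0 < a < 1.
Proof. unfold a. pose proof (exp_pos lo). pose proof (exp_increasing lo 0 Hlo). rewrite exp_0 in H0. lra. Qed.
Lemma b_pos : 0 < b.
Proof. unfold b. pose proof (exp_increasing 0 hi Hhi). rewrite exp_0 in H. lra. Qed.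

Lemma G1 phi : lo <= phi <= 0 -> e * (phi - lo) / (- lo) <= f0 - fpot phi.
Proof. intros Hp. unfold fpot, e.
  pose proof (exp_tan lo phi). pose proof (exp_tan 0 phi). rewrite exp_0 in H0.
  pose proof (exp_pos phi).
  assert (Hc : (-lo) * exp phi <= (-phi) * exp lo + (phi - lo)) by nra.
  apply Rmult_le_reg_r with (-lo). lra.
  unfold Rdiv. rewrite Rmult_assoc, Rinv_l by lra. nra. Qed.

Lemma G2 phi : 0 <= phi <= hi -> e * (hi - phi) / hi <= f0 - fpot phi.
Proof. intros Hp. unfold fpot, e.
  pose proof (exp_tan hi phi). pose proof (exp_tan 0 phi). rewrite exp_0 in H0.
  pose proof (exp_pos phi).
  assert (Hc : hi * exp phi <= (hi - phi) + phi * exp hi) by nra.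
  apply Rmult_le_reg_r with hi. lra.
  unfold Rdiv. rewrite Rmult_assoc, Rinv_l by lra. nra. Qed.

Lemma gpos phi : lo < phi < hi -> 0 < f0 - fpot phi.
Proof. intros Hp. assert (He : 0 < e) by (unfold e; lra).
  destruct (Rle_or_lt phi 0).
  - eapply Rlt_le_trans; [|apply G1; lra]. apply Rdiv_lt_0_compat; nra.
  - eapply Rlt_le_trans; [|apply G2; lra]. apply Rdiv_lt_0_compat; nra. Qed.

Lemma G3 phi : f0 - fpot phi <= e.
Proof. unfold fpot, e. pose proof (exp_ineq1_le phi). lra. Qed.
Lemma G4 phi : f0 - fpot phi <= a * (phi - lo).
Proof. unfold fpot, a. pose proof (exp_tan phi lo). nra. Qed.
Lemma G5 phi : f0 - fpot phi <= b * (hi - phi).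
Proof. unfold fpot, b. pose proof (exp_tan phi hi). nra. Qed.

Lemma k_cont phi : lo < phi < hi -> continuous k phi.
Proof. intros Hp. pose proof (gpos phi Hp). unfold k, fpot in *.
  apply (ex_derive_continuous (V:=R_NormedModule)). auto_derive.
  repeat split; try lra. apply Rgt_not_eq, sqrt_lt_R0; lra. Qed.

Lemma k_pos phi : lo < phi < hi -> 0 <= k phi.
Proof. intros Hp. pose proof (gpos phi Hp). unfold k. left. apply Rinv_0_lt_compat, sqrt_lt_R0; lra. Qed.

Lemma exk x y : lo < x -> x <= y -> y < hi -> ex_RInt k x y.
Proof. intros. apply (ex_RInt_in k lo hi); auto. exact k_cont. Qed.

Lemma Chas3 x y z : lo < x -> x <= y -> y <= z -> z < hi -> RInt k x z = RInt k x y + RInt k y z.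
Proof. intros. rewrite <- (RInt_Chasles k x y z). reflexivity. apply exk; lra. apply exk; lra. Qed.

Lemma k_upper x y : lo < x <= 0 -> 0 <= y < hi ->
  RInt k x y <= 2 * sqrt (e / (-lo) * (0 - lo)) / (e / (- lo)) + 2 * sqrt (e / hi * (hi - 0)) / (e / hi).
Proof. intros Hx Hy. assert (He : 0 < e) by (unfold e; lra).
  set (cl := e / (-lo)). set (ch := e / hi).
  assert (Hcl : 0 < cl) by (apply Rdiv_lt_0_compat; lra).
  assert (Hch : 0 < ch) by (apply Rdiv_lt_0_compat; lra).
  rewrite (Chas3 x 0 y) by lra.
  apply Rplus_le_compat.
  - pose proof (isR_left cl lo x 0 Hcl (proj1 Hx) (proj2 Hx)) as HI.
    eapply Rle_trans. apply (RInt_le k (fun t => / sqrt (cl * (t - lo)))). lra. apply exk; lra.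
    eexists; exact HI.
    intros t Ht. apply inv_sqrt_le. apply Rmult_lt_0_compat; lra.
    replace (cl * (t - lo)) with (e * (t - lo) / (- lo)) by (unfold cl; field; lra). apply G1; lra.
    rewrite (is_RInt_unique _ _ _ _ HI). pose proof (sqrt_pos (cl * (x - lo))).
    unfold Rdiv. apply Rmult_le_compat_r. left; apply Rinv_0_lt_compat; lra. lra.
  - pose proof (isR_right ch hi 0 y Hch (proj1 Hy) (proj2 Hy)) as HI.
    eapply Rle_trans. apply (RInt_le k (fun t => / sqrt (ch * (hi - t)))). lra. apply exk; lra.
    eexists; exact HI.
    intros t Ht. apply inv_sqrt_le. apply Rmult_lt_0_compat; lra.
    replace (ch * (hi - t)) with (e * (hi - t) / hi) by (unfold ch; field; lra). apply G2; lra.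
    rewrite (is_RInt_unique _ _ _ _ HI). pose proof (sqrt_pos (ch * (hi - y))).
    unfold Rdiv. apply Rmult_le_compat_r. left; apply Rinv_0_lt_compat; lra. lra.
Qed.


Lemma x1_le : e / a <= - lo.
Proof. pose proof a_pos. unfold e, a in *. apply Rmult_le_reg_r with (1 - exp lo). lra.
  unfold Rdiv. rewrite Rmult_assoc, Rinv_l by lra. pose proof (exp_tan 0 lo). rewrite exp_0 in H0. nra. Qed.
Lemma x2_ge : e / b <= hi.
Proof. pose proof b_pos. unfold e, b in *. apply Rmult_le_reg_r with (exp hi - 1). lra.
  unfold Rdiv. rewrite Rmult_assoc, Rinv_l by lra. pose proof (exp_tan 0 hi). rewrite exp_0 in H0. nra. Qed.

Definition Fv := sqrt e / a + a / sqrt e + b / sqrt e + sqrt e / b.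

Lemma k_lower x y : lo < x <= lo + e / a -> hi - e / b <= y < hi ->
  Fv - 2 * sqrt (a * (x - lo)) / a - 2 * sqrt (b * (hi - y)) / b <= RInt k x y.
Proof. intros Hx Hy. assert (He : 0 < e) by (unfold e; lra). pose proof a_pos. pose proof b_pos.
  pose proof x1_le. pose proof x2_ge.
  assert (Hea : 0 <= e / a) by (apply Rdiv_le_0_compat; lra).
  assert (Heb : 0 <= e / b) by (apply Rdiv_le_0_compat; lra).
  remember (lo + e / a) as x1 eqn:Ex1. remember (hi - e / b) as x2 eqn:Ex2.
  rewrite (Chas3 x x1 y) by lra. rewrite (Chas3 x1 x2 y) by lra.
  assert (P1 : 2 * (sqrt (a * (x1 - lo)) - sqrt (a * (x - lo))) / a <= RInt k x x1).
  { pose proof (isR_left a lo x x1 (proj1 H) (proj1 Hx) (proj2 Hx)) as HI.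
    rewrite <- (is_RInt_unique _ _ _ _ HI).
    apply (RInt_le (fun t => / sqrt (a * (t - lo))) k). lra. eexists; exact HI. apply exk; lra.
    intros t Ht. apply inv_sqrt_le. apply gpos; lra. apply G4. }
  assert (P3 : 2 * (sqrt (b * (hi - x2)) - sqrt (b * (hi - y))) / b <= RInt k x2 y).
  { pose proof (isR_right b hi x2 y H0 (proj1 Hy) (proj2 Hy)) as HI.
    rewrite <- (is_RInt_unique _ _ _ _ HI).
    apply (RInt_le (fun t => / sqrt (b * (hi - t))) k). lra. eexists; exact HI. apply exk; lra.
    intros t Ht. apply inv_sqrt_le. apply gpos; lra. apply G5. }
  assert (P2 : (x2 - x1) * / sqrt e <= RInt k x1 x2).
  { replace ((x2 - x1) * / sqrt e) with (RInt (fun _ => / sqrt e) x1 x2).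
    apply RInt_le. lra. apply ex_RInt_const. apply exk; lra.
    intros t Ht. apply inv_sqrt_le. apply gpos; lra. apply G3.
    rewrite RInt_const. reflexivity. }
  assert (Hx1 : a * (x1 - lo) = e) by (rewrite Ex1; field; lra).
  assert (Hx2 : b * (hi - x2) = e) by (rewrite Ex2; field; lra).
  rewrite Hx1 in P1. rewrite Hx2 in P3.
  assert (Hab : hi - lo = a + b) by (unfold a, b; lra).
  assert (Hse : sqrt e * sqrt e = e) by (apply sqrt_sqrt; lra).
  assert (Hsp : 0 < sqrt e) by (apply sqrt_lt_R0; lra).
  assert (Heq : Fv - 2 * sqrt (a * (x - lo)) / a - 2 * sqrt (b * (hi - y)) / b =
     2 * (sqrt e - sqrt (a * (x - lo))) / a + (x2 - x1) * / sqrt e + 2 * (sqrt e - sqrt (b * (hi - y))) / b).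
  { unfold Fv. rewrite Ex1, Ex2. replace hi with (lo + a + b) by lra. set (s := sqrt e) in *. rewrite <- Hse. field. lra. }
  rewrite Heq. lra.
Qed.

Lemma beta_main : exists S, is_RInt_gen k (at_right lo) (at_left hi) S /\ Fv <= S.
Proof.
  destruct (improper_sup k lo hi 0 _ (conj Hlo Hhi) k_cont k_pos k_upper) as [S [HS Hup]].
  exists S. split; auto.
  assert (He : 0 < e) by (unfold e; lra). pose proof a_pos. pose proof b_pos.
  pose proof x1_le. pose proof x2_ge.
  apply Rnot_lt_le. intro Hlt. set (d := Fv - S).
  assert (Hd : 0 < d) by (unfold d; lra).
  set (eta := Rmin (Rmin (e / a) (e / b)) (Rmin (a * (d * d) / 64) (b * (d * d) / 64))).
  assert (Hdd : 0 < d * d) by nra.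
  assert (Heta : 0 < eta). { unfold eta. repeat apply Rmin_pos; apply Rdiv_lt_0_compat; try apply Rmult_lt_0_compat; lra. }
  assert (E1 : eta <= e / a) by (unfold eta; eapply Rle_trans; [apply Rmin_l|apply Rmin_l]).
  assert (E2 : eta <= e / b) by (unfold eta; eapply Rle_trans; [apply Rmin_l|apply Rmin_r]).
  assert (E3 : eta <= a * (d * d) / 64) by (unfold eta; eapply Rle_trans; [apply Rmin_r|apply Rmin_l]).
  assert (E4 : eta <= b * (d * d) / 64) by (unfold eta; eapply Rle_trans; [apply Rmin_r|apply Rmin_r]).
  pose proof (k_lower (lo + eta) (hi - eta) ltac:(lra) ltac:(lra)) as HL.
  pose proof (Hup (lo + eta) (hi - eta) ltac:(lra) ltac:(lra)) as HU.
  replace (lo + eta - lo) with eta in HL by ring. replace (hi - (hi - eta)) with eta in HL by ring.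
  assert (D1 : 2 * sqrt (a * eta) / a <= d / 4).
  { assert (sqrt (a * eta) <= a * d / 8).
    { rewrite <- (sqrt_pow2 (a * d / 8)) by nra. apply sqrt_le_1_alt.
      apply Rmult_le_compat_l with (r := a) in E3; [|lra]. nra. }
    apply Rmult_le_reg_r with a. lra. unfold Rdiv. rewrite Rmult_assoc, Rinv_l by lra. nra. }
  assert (D2 : 2 * sqrt (b * eta) / b <= d / 4).
  { assert (sqrt (b * eta) <= b * d / 8).
    { rewrite <- (sqrt_pow2 (b * d / 8)) by nra. apply sqrt_le_1_alt.
      apply Rmult_le_compat_l with (r := b) in E4; [|lra]. nra. }
    apply Rmult_le_reg_r with b. lra. unfold Rdiv. rewrite Rmult_assoc, Rinv_l by lra. nra. }
  unfold d in *. lra.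
Qed.

End B.

Lemma beta_ge f0 lo hi : 1 < f0 -> lo < 0 -> 0 < hi -> exp lo - lo = f0 -> exp hi - hi = f0 ->
  Fv f0 lo hi / 2 <= / 2 * RInt_gen (fun phi => / sqrt (f0 - fpot phi)) (at_right lo) (at_left hi).
Proof. intros H1 H2 H3 H4 H5.
  destruct (beta_main f0 lo hi H1 H2 H3 H4 H5) as [S [HS HF]].
  rewrite (is_RInt_gen_unique _ S HS). lra. Qed.


Lemma fpot_cont : continuity fpot.
Proof. unfold fpot. apply continuity_minus. apply derivable_continuous, derivable_exp. apply derivable_continuous, derivable_id. Qed.

Lemma exp_gt2 x : 1 < x -> 2 * x < exp x.
Proof. intros H. pose proof (exp_ge_taylor x 2 ltac:(lra)). simpl in H0. nra. Qed.

Lemma phi_lo_spec f0 : 1 < f0 -> phi_lo f0 < 0 /\ exp (phi_lo f0) - phi_lo f0 = f0.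
Proof. intros Hf.
  assert (Hex : exists p, p <= 0 /\ fpot p = f0).
  { destruct (IVT_gen fpot (-f0) 0 f0 fpot_cont) as [p [Hp1 Hp2]].
    - unfold fpot. rewrite exp_0. pose proof (exp_pos (-f0)).
      rewrite Rmin_right by lra. rewrite Rmax_left by lra. lra.
    - exists p. rewrite Rmax_right in Hp1 by lra. split; [lra|auto]. }
  assert (Hs : phi_lo f0 <= 0 /\ fpot (phi_lo f0) = f0) by (unfold phi_lo, phi_hi; apply epsilon_spec; exact Hex).
  destruct Hs as [H1 H2]. unfold fpot in H2. split; auto.
  destruct H1 as [H1|H1]; auto. rewrite H1, exp_0 in H2. lra. Qed.

Lemma phi_hi_spec f0 : 1 < f0 -> 0 < phi_hi f0 /\ exp (phi_hi f0) - phi_hi f0 = f0.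
Proof. intros Hf.
  assert (Hex : exists p, 0 <= p /\ fpot p = f0).
  { destruct (IVT_gen fpot 0 f0 f0 fpot_cont) as [p [Hp1 Hp2]].
    - unfold fpot. rewrite exp_0. pose proof (exp_gt2 f0 Hf).
      rewrite Rmin_left by lra. rewrite Rmax_right by lra. lra.
    - exists p. rewrite Rmin_left in Hp1 by lra. split; [lra|auto]. }
  assert (Hs : 0 <= phi_hi f0 /\ fpot (phi_hi f0) = f0) by (unfold phi_lo, phi_hi; apply epsilon_spec; exact Hex).
  destruct Hs as [H1 H2]. unfold fpot in H2. split; auto.
  destruct H1 as [H1|H1]; auto. rewrite <- H1, exp_0 in H2. lra. Qed.

Lemma mono_le (f df : R -> R) a b : a <= b ->
  (forall x, a <= x <= b -> is_derive f x (df x)) ->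
  (forall x, a <= x <= b -> 0 <= df x) -> f a <= f b.
Proof. intros Hab Hd Hp.
  destruct (MVT_gen f a b df) as [c [Hc Heq]].
  - intros x Hx. rewrite Rmin_left in Hx by lra. rewrite Rmax_right in Hx by lra. apply Hd; lra.
  - intros x Hx. rewrite Rmin_left in Hx by lra. rewrite Rmax_right in Hx by lra.
    apply continuity_pt_filterlim. apply (ex_derive_continuous (V:=R_NormedModule)).
    eexists; apply Hd; lra.
  - rewrite Rmin_left in Hc by lra. rewrite Rmax_right in Hc by lra.
    pose proof (Hp c Hc). nra. Qed.

Lemma expm_inv x : exp (- x) = / exp x.
Proof. apply exp_Ropp. Qed.

Lemma sinh_ge x : 0 <= x -> 2 * x <= exp x - exp (- x).
Proof. intros Hx.
  pose proof (mono_le (fun x => exp x - exp (- x) - 2 * x) (fun x => exp x + exp (-x) - 2) 0 x Hx) as H.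
  simpl in H. rewrite Ropp_0, exp_0 in H. cut (0 <= exp x - exp (- x) - 2 * x). lra.
  eapply Rle_trans; [|apply H]. lra.
  - intros t _. auto_derive. auto. ring.
  - intros t _. rewrite expm_inv. pose proof (exp_pos t).
    assert (exp t + / exp t - 2 = (exp t - 1) * (exp t - 1) / exp t) by (field; lra).
    rewrite H1. apply Rdiv_le_0_compat. apply Rle_0_sqr. lra.
Qed.

(* t^2 as function of x = -lo is nonincreasing *)
Definition rr x := (1 - exp (- x)) ^ 2 / (exp (- x) + x - 1).
Definition qq y := (exp y - 1) ^ 2 / (exp y - y - 1).

Lemma D_pos x : 0 < x -> 0 < exp (- x) + x - 1.
Proof. intros. pose proof (exp_ineq1 (- x) ltac:(lra)). lra. Qed.
Lemma G_pos y : 0 < y -> 0 < exp y - y - 1.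
Proof. intros. pose proof (exp_ineq1 y ltac:(lra)). lra. Qed.

Lemma rr_decr x1 x2 : 0 < x1 -> x1 <= x2 -> rr x2 <= rr x1.
Proof. intros H1 H2.
  set (df := fun x => (1 - exp (- x)) * (1 - exp (-x) * exp (-x) - 2 * x * exp (- x)) / (exp (- x) + x - 1) ^ 2).
  pose proof (mono_le (fun x => - rr x) df x1 x2 H2) as H. cut (- rr x1 <= - rr x2). lra.
  apply H.
  - intros x Hx. pose proof (D_pos x ltac:(lra)). unfold rr, df. auto_derive. lra.
    field. lra.
  - intros x Hx. unfold df. pose proof (D_pos x ltac:(lra)). pose proof (sinh_ge x ltac:(lra)).
    pose proof (exp_pos (- x)). rewrite expm_inv in *. pose proof (exp_pos x).
    pose proof (exp_ineq1 x ltac:(lra)).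
    apply Rdiv_le_0_compat; [|apply pow_lt; lra].
    assert (Hu : / exp x < 1) by (rewrite <- Rinv_1; apply Rinv_lt_contravar; lra).
    apply Rmult_le_pos. lra.
    assert (1 - / exp x * / exp x - 2 * x * / exp x = (exp x - / exp x - 2 * x) * / exp x) by (field; lra).
    rewrite H7. apply Rmult_le_pos. lra. left; apply Rinv_0_lt_compat; lra.
Qed.

Lemma qq_incr y1 y2 : 0 < y1 -> y1 <= y2 -> qq y1 <= qq y2.
Proof. intros H1 H2.
  set (df := fun y => (exp y - 1) * (exp y * exp y - 2 * y * exp y - 1) / (exp y - y - 1) ^ 2).
  apply (mono_le qq df y1 y2 H2).
  - intros y Hy. pose proof (G_pos y ltac:(lra)). unfold qq, df. auto_derive. lra. field. lra.
  - intros y Hy. unfold df. pose proof (G_pos y ltac:(lra)). pose proof (sinh_ge y ltac:(lra)).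
    rewrite expm_inv in *. pose proof (exp_pos y). pose proof (exp_ineq1 y ltac:(lra)).
    apply Rdiv_le_0_compat; [|apply pow_lt; lra].
    apply Rmult_le_pos. lra.
    assert (exp y * exp y - 2 * y * exp y - 1 = (exp y - / exp y - 2 * y) * exp y) by (field; lra).
    rewrite H5. apply Rmult_le_pos; lra.
Qed.

Lemma qq_ge2 y : 0 < y -> 2 * (exp y - y - 1) <= (exp y - 1) ^ 2.
Proof. intros Hy.
  pose proof (mono_le (fun y => (exp y - 1) ^ 2 - 2 * (exp y - y - 1)) (fun y => 2 * (exp y - 1) * (exp y - 1)) 0 y ltac:(lra)) as H.
  simpl in H. rewrite exp_0 in H. cut (0 <= (exp y - 1) ^ 2 - 2 * (exp y - y - 1)). lra.
  eapply Rle_trans; [|apply H]. lra.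
  - intros t _. auto_derive. auto. ring.
  - intros t _. pose proof (Rle_0_sqr (exp t - 1)). unfold Rsqr in *. lra.
Qed.

Lemma ln_le_sub1 z : 0 < z -> ln z <= z - 1.
Proof. intros Hz. pose proof (exp_ineq1_le (ln z)). rewrite exp_ln in H by lra. lra. Qed.

Lemma phi_mono L B : 1 <= L -> L <= B -> L^2 - ln (4 * L^2) <= B^2 - ln (4 * B^2).
Proof. intros H1 H2.
  assert (ln (4 * B^2) - ln (4 * L^2) <= (B / L - 1) * 2).
  { rewrite <- ln_div by nra. replace (4 * B ^ 2 / (4 * L ^ 2)) with ((B / L) ^ 2) by (field; lra).
    rewrite ln_pow by (apply Rdiv_lt_0_compat; lra).
    pose proof (ln_le_sub1 (B / L) ltac:(apply Rdiv_lt_0_compat; lra)). simpl INR. lra. }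
  assert ((B / L - 1) * 2 = 2 * (B - L) / L) by (field; lra).
  assert (2 * (B - L) / L <= 2 * (B - L)).
  { unfold Rdiv. rewrite Rmult_assoc. 
    assert (/ L <= 1) by (rewrite <- Rinv_1; apply Rinv_le_contravar; lra).
    assert (0 <= 2 * (B - L)) by lra. nra. }
  nra.
Qed.

Lemma core (e x y Tt Ts Fk c : R) :
  0 < e -> 0 < x -> 0 < y -> exp (- x) + x - 1 = e -> exp y - y - 1 = e ->
  let a := 1 - exp (- x) in let b := exp y - 1 in
  Tt <= a / sqrt e + sqrt e / a -> Ts <= b / sqrt e + sqrt e / b ->
  Fk <= Tt + Ts -> Fk <= exp c -> 1 + e < Fk ^ 2 / 4 - 2 * c -> 2 <= Fk ->
  forall beta, (sqrt e / a + a / sqrt e + b / sqrt e + sqrt e / b) / 2 <= beta ->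
    beta ^ 2 - ln (4 * beta ^ 2) - (1 + e) > 0.
Proof. intros He Hx Hy Ex Ey a b Ht Hs HF Hc Hm H2 beta Hb.
  assert (HL : Fk / 2 <= beta) by lra.
  pose proof (phi_mono (Fk / 2) beta ltac:(lra) HL).
  assert (ln (4 * (Fk / 2) ^ 2) <= 2 * c).
  { replace (4 * (Fk / 2) ^ 2) with (Fk ^ 2) by field.
    rewrite ln_pow by lra. simpl INR. replace (1 + 1) with 2 by ring.
    apply Rmult_le_compat_l. lra. rewrite <- (ln_exp c). apply ln_le; lra. }
  assert ((Fk / 2) ^ 2 = Fk ^ 2 / 4) by field. lra.
Qed.

Lemma T_mono_le1 t tau : 0 < t -> t <= tau -> tau <= 1 -> tau + / tau <= t + / t.
Proof. intros H1 H2 H3.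
  assert (tau + / tau - (t + / t) = (tau - t) * (1 - / (t * tau))) by (field; lra).
  assert (/ (t * tau) >= 1). { apply Rle_ge. rewrite <- Rinv_1. apply Rinv_le_contravar. nra. nra. }
  nra. Qed.

Lemma T_mono_ge1 s sig : 1 <= sig -> sig <= s -> sig + / sig <= s + / s.
Proof. intros H1 H2.
  assert (s + / s - (sig + / sig) = (s - sig) * (1 - / (s * sig))) by (field; lra).
  assert (/ (s * sig) <= 1). { rewrite <- Rinv_1. apply Rinv_le_contravar. lra. nra. }
  nra. Qed.

Lemma T_ge2 t : 0 < t -> 2 <= t + / t.
Proof. intros H. assert (t + / t - 2 = (t - 1) * (t - 1) / t) by (field; lra).
  assert (0 <= (t - 1) * (t - 1) / t). { apply Rdiv_le_0_compat; auto. pose proof (Rle_0_sqr (t-1)). unfold Rsqr in H1. lra. }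
  lra. Qed.

Lemma sqr_le_le u v : 0 <= u -> 0 <= v -> u ^ 2 <= v ^ 2 -> u <= v.
Proof. intros. nra. Qed.

Lemma ax_pos x : 0 < x -> 0 < 1 - exp (- x).
Proof. intros. pose proof (exp_increasing (-x) 0 ltac:(lra)). rewrite exp_0 in H0. lra. Qed.
Lemma by_pos y : 0 < y -> 0 < exp y - 1.
Proof. intros. pose proof (exp_increasing 0 y H). rewrite exp_0 in H0. lra. Qed.

Lemma tsq x e : 0 < x -> exp (- x) + x - 1 = e -> ((1 - exp (- x)) / sqrt e) ^ 2 = rr x.
Proof. intros Hx Ex. pose proof (D_pos x Hx). unfold rr. rewrite Ex in *.
  unfold Rdiv. rewrite Rpow_mult_distr, pow_inv. rewrite pow2_sqrt by lra. reflexivity. Qed.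
Lemma ssq y e : 0 < y -> exp y - y - 1 = e -> ((exp y - 1) / sqrt e) ^ 2 = qq y.
Proof. intros Hy Ey. pose proof (G_pos y Hy). unfold qq. rewrite Ey in *.
  unfold Rdiv. rewrite Rpow_mult_distr, pow_inv. rewrite pow2_sqrt by lra. reflexivity. Qed.

Lemma inv_div u v : 0 < u -> 0 < v -> v / u = / (u / v).
Proof. intros. field. lra. Qed.

Lemma t_part2 x e : 0 < e -> 0 < x -> 2 <= (1 - exp (- x)) / sqrt e + sqrt e / (1 - exp (- x)).
Proof. intros He Hx. pose proof (ax_pos x Hx). pose proof (sqrt_lt_R0 e He).
  rewrite (inv_div (1 - exp (- x)) (sqrt e)) by lra. apply T_ge2. apply Rdiv_lt_0_compat; lra. Qed.

Lemma x_ge x xk : 0 < xk -> 0 < x -> exp (- xk) + xk - 1 <= exp (- x) + x - 1 -> xk <= x.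
Proof. intros H1 H2 H3. apply Rnot_lt_le. intro Hlt.
  (* E(xk) - E(x) = exp(-x) (exp(-(xk-x)) - 1) + (xk - x) > 0 *)
  assert (exp (- xk) = exp (- x) * exp (- (xk - x))) by (rewrite <- exp_plus; f_equal; ring).
  pose proof (exp_ineq1_le (- (xk - x))). pose proof (exp_pos (- x)).
  assert (exp (- x) < 1) by (rewrite <- exp_0; apply exp_increasing; lra).
  nra. Qed.

Lemma y_ge y yk : 0 < yk -> 0 < y -> exp yk - yk - 1 <= exp y - y - 1 -> yk <= y.
Proof. intros H1 H2 H3. apply Rnot_lt_le. intro Hlt.
  assert (exp yk = exp y * exp (yk - y)) by (rewrite <- exp_plus; f_equal; ring).
  pose proof (exp_ineq1 (yk - y) ltac:(lra)). pose proof (exp_pos y).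
  assert (1 < exp y) by (rewrite <- exp_0; apply exp_increasing; lra).
  nra. Qed.

Lemma t_part x e xk tau : 0 < e -> 0 < x -> 0 < xk -> exp (- x) + x - 1 = e ->
  exp (- xk) + xk - 1 <= e -> rr xk <= tau ^ 2 -> 0 < tau <= 1 ->
  tau + / tau <= (1 - exp (- x)) / sqrt e + sqrt e / (1 - exp (- x)).
Proof. intros He Hx Hxk Ex H1 H2 H3. pose proof (ax_pos x Hx). pose proof (sqrt_lt_R0 e He).
  rewrite (inv_div (1 - exp (- x)) (sqrt e)) by lra.
  apply T_mono_le1; try lra. apply Rdiv_lt_0_compat; lra.
  apply sqr_le_le. apply Rlt_le, Rdiv_lt_0_compat; lra. lra.
  rewrite (tsq x e Hx Ex). eapply Rle_trans; [|exact H2]. apply rr_decr; auto.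
  apply x_ge; auto. lra. Qed.

Lemma s_part y e yk sig : 0 < e -> 0 < y -> 0 < yk -> exp y - y - 1 = e ->
  exp yk - yk - 1 <= e -> sig ^ 2 <= qq yk -> 1 <= sig ->
  sig + / sig <= (exp y - 1) / sqrt e + sqrt e / (exp y - 1).
Proof. intros He Hy Hyk Ey H1 H2 H3. pose proof (by_pos y Hy). pose proof (sqrt_lt_R0 e He).
  rewrite (inv_div (exp y - 1) (sqrt e)) by lra.
  apply T_mono_ge1; try lra.
  apply sqr_le_le. lra. apply Rlt_le, Rdiv_lt_0_compat; lra.
  rewrite (ssq y e Hy Ey). eapply Rle_trans; [exact H2|]. apply qq_incr; auto.
  apply y_ge; auto. lra. Qed.

Lemma s_part0 y e sig : 0 < e -> 0 < y -> exp y - y - 1 = e -> sig ^ 2 <= 2 -> 1 <= sig ->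
  sig + / sig <= (exp y - 1) / sqrt e + sqrt e / (exp y - 1).
Proof. intros He Hy Ey H2 H3. pose proof (by_pos y Hy). pose proof (sqrt_lt_R0 e He).
  rewrite (inv_div (exp y - 1) (sqrt e)) by lra.
  apply T_mono_ge1; try lra.
  apply sqr_le_le. lra. apply Rlt_le, Rdiv_lt_0_compat; lra.
  rewrite (ssq y e Hy Ey). eapply Rle_trans; [exact H2|]. unfold qq.
  pose proof (G_pos y Hy). pose proof (qq_ge2 y Hy).
  apply Rmult_le_reg_r with (exp y - y - 1). lra. unfold Rdiv. rewrite Rmult_assoc, Rinv_l by lra. lra. Qed.

Fixpoint zfact (n:nat) : Z := match n with O => 1%Z | S m => (Z.of_nat (S m) * zfact m)%Z end.
Definition rf n := IZR (zfact n).
Lemma zfact_pos n : (0 < zfact n)%Z.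
Proof. induction n. reflexivity. change (zfact (S n)) with (Z.of_nat (S n) * zfact n)%Z. apply Z.mul_pos_pos; lia. Qed.
Lemma rf_fact n : rf n = INR (Factorial.fact n).
Proof. induction n as [|n IH]. reflexivity.
 unfold rf in *. change (zfact (S n)) with (Z.of_nat (S n) * zfact n)%Z.
 rewrite mult_IZR, <- INR_IZR_INZ, IH.
 change (Factorial.fact (S n)) with (S n * Factorial.fact n)%nat.
 rewrite mult_INR. ring. Qed.
Definition tsum n x := sum_f_R0 (fun k => x^k / rf k) n.
Lemma exp_lb n x : 0 <= x -> tsum n x <= exp x.
Proof. intros Hx. unfold tsum. rewrite (sum_eq _ (fun k => x ^ k / INR (Factorial.fact k))).
 apply exp_ge_taylor; auto. intros i _. rewrite rf_fact. reflexivity. Qed.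
Lemma Dn_exp m z : Derive_n exp m z = exp z.
Proof. apply is_derive_n_unique, is_derive_n_exp. Qed.
Lemma exp_ub n x : 0 < x -> exp x <= tsum n x + x^(S n) / rf (S n) * exp x.
Proof. intros Hx.
 assert (Hd : forall t, 0 <= t <= x -> forall k, (k <= S n)%nat -> ex_derive_n exp k t).
 { intros t _ k _. destruct k. simpl. exact I. exists (exp t). exact (is_derive_n_exp (S k) t). }
 destruct (Taylor_Lagrange exp n 0 x Hx Hd) as [z [[Hz1 Hz2] Heq]].
 assert (Hez : exp z <= exp x) by (left; apply exp_increasing; lra).
 rewrite Heq at 1. rewrite Dn_exp. unfold tsum.
 apply Rplus_le_compat.
 - right. apply sum_eq. intros i _. rewrite Dn_exp, exp_0, rf_fact, Rminus_0_r. field. apply not_0_INR, Factorial.fact_neq_0.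
 - rewrite Rminus_0_r, rf_fact. apply Rmult_le_compat_l.
   + apply Rdiv_le_0_compat. apply pow_le; lra. apply lt_0_INR, Factorial.lt_O_fact.
   + exact Hez.
Qed.
Fixpoint qpow (q:Q) (n:nat) : Q := match n with O => 1%Q | S m => (q * qpow q m)%Q end.
Definition qterm q k := (qpow q k / inject_Z (zfact k))%Q.
Fixpoint tQ (n:nat) (q:Q) : Q := match n with O => 1%Q | S m => Qred (tQ m q + qterm q (S m))%Q end.
Lemma Q2R_qpow q n : Q2R (qpow q n) = (Q2R q)^n.
Proof. induction n; simpl. unfold Q2R; simpl; field. rewrite Q2R_mult, IHn. reflexivity. Qed.
Lemma Q2R_inject z : Q2R (inject_Z z) = IZR z.
Proof. unfold Q2R; simpl. field. Qed.
Lemma Q2R_qterm q k : Q2R (qterm q k) = (Q2R q)^k / rf k.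
Proof. unfold qterm. rewrite Q2R_div. rewrite Q2R_qpow, Q2R_inject. reflexivity.
 intro H. apply Qeq_eqR in H. rewrite Q2R_inject, RMicromega.Q2R_0 in H.
 apply eq_IZR in H. pose proof (zfact_pos k). lia. Qed.
Lemma Q2R_tQ n q : Q2R (tQ n q) = tsum n (Q2R q).
Proof. induction n. simpl tQ. unfold tsum; simpl. unfold rf; simpl. unfold Q2R; simpl; field.
 change (tQ (S n) q) with (Qred (tQ n q + qterm q (S n))).
 rewrite (Qeq_eqR _ _ (Qred_correct _)). rewrite Q2R_plus, IHn, Q2R_qterm. unfold tsum. simpl. reflexivity. Qed.
Lemma exp_ge_Q n (q r : Q) : Qle_bool 0 q = true -> Qle_bool r (tQ n q) = true -> Q2R r <= exp (Q2R q).
Proof. intros H1 H2. apply Qle_bool_iff, Qle_Rle in H1. apply Qle_bool_iff, Qle_Rle in H2.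
 rewrite RMicromega.Q2R_0 in H1. rewrite Q2R_tQ in H2. eapply Rle_trans. exact H2. apply exp_lb; auto. Qed.
Definition Qlt_bool (a b : Q) := negb (Qle_bool b a).
Lemma Qlt_bool_iff a b : Qlt_bool a b = true -> (a < b)%Q.
Proof. unfold Qlt_bool. intro H. apply Qnot_le_lt. intro H'. apply Qle_bool_iff in H'. rewrite H' in H. discriminate. Qed.
Lemma exp_le_Q n (q r : Q) : Qlt_bool 0 q = true ->
  Qlt_bool 0 (1 - qterm q (S n)) = true ->
  Qle_bool (tQ n q) (r * (1 - qterm q (S n))) = true -> exp (Q2R q) <= Q2R r.
Proof. intros H1 H2 H3. apply Qlt_bool_iff, Qlt_Rlt in H1. apply Qlt_bool_iff, Qlt_Rlt in H2.
 apply Qle_bool_iff, Qle_Rle in H3. rewrite RMicromega.Q2R_0 in H1, H2.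
 rewrite Q2R_minus, Q2R_qterm, RMicromega.Q2R_1 in H2. rewrite Q2R_mult, Q2R_minus, Q2R_qterm, RMicromega.Q2R_1, Q2R_tQ in H3.
 pose proof (exp_ub n (Q2R q) H1). nra. Qed.

Lemma n1_help xk ek Lx : 0 < Lx -> Lx <= exp xk -> / Lx + xk - 1 <= ek -> exp (- xk) + xk - 1 <= ek.
Proof. intros. rewrite expm_inv. assert (/ exp xk <= / Lx) by (apply Rinv_le_contravar; lra). lra. Qed.
Lemma n2_help yk ek Uy : exp yk <= Uy -> Uy - yk - 1 <= ek -> exp yk - yk - 1 <= ek.
Proof. intros. lra. Qed.
Lemma n3_help xk tau Lx Ux : 0 < xk -> 0 < Lx -> Lx <= exp xk <= Ux ->
  (forall w, Lx <= w <= Ux -> (w - 1) ^ 2 <= tau ^ 2 * (w + (xk - 1) * w ^ 2)) -> rr xk <= tau ^ 2.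
Proof. intros H0 H1 H2 H3. pose proof (D_pos xk H0). unfold rr in *. rewrite expm_inv in *.
  set (w := exp xk) in *. assert (Hw : 0 < w) by lra.
  apply Rmult_le_reg_r with (/ w + xk - 1). lra. unfold Rdiv. rewrite Rmult_assoc, Rinv_l by lra.
  pose proof (H3 w H2). 
  replace ((1 - / w) ^ 2) with ((w - 1) ^ 2 * / w ^ 2) by (field; lra).
  replace (tau ^ 2 * (/ w + xk - 1)) with (tau ^ 2 * (w + (xk - 1) * w ^ 2) * / w ^ 2) by (field; lra).
  rewrite Rmult_1_r. apply Rmult_le_compat_r. left. apply Rinv_0_lt_compat, pow_lt; lra. lra. Qed.
Lemma n4_help yk sig Ly Uy : 0 < yk -> Ly <= exp yk <= Uy ->
  (forall v, Ly <= v <= Uy -> sig ^ 2 * (v - yk - 1) <= (v - 1) ^ 2) -> sig ^ 2 <= qq yk.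
Proof. intros H0 H2 H3. pose proof (G_pos yk H0). unfold qq.
  apply Rmult_le_reg_r with (exp yk - yk - 1). lra. unfold Rdiv. rewrite Rmult_assoc, Rinv_l by lra.
  rewrite Rmult_1_r. apply H3; lra. Qed.

Ltac qlra := unfold Q2R in *; simpl Qnum in *; simpl Qden in *; lra.
Ltac qnra := unfold Q2R in *; simpl Qnum in *; simpl Qden in *; nra.
Lemma seg0 (e x y : R) : (Q2R (0#1)) <= e -> e <= (Q2R (41#100)) -> 0 < e -> 0 < x -> 0 < y ->
  exp (- x) + x - 1 = e -> exp y - y - 1 = e -> forall beta,
  (sqrt e / (1 - exp (- x)) + (1 - exp (- x)) / sqrt e + (exp y - 1) / sqrt e + sqrt e / (exp y - 1)) / 2 <= beta ->
  beta ^ 2 - ln (4 * beta ^ 2) - (1 + e) > 0.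
Proof. intros H1 H2 He Hx Hy Ex Ey.
  pose proof (exp_ge_Q 22 (7081#5000) (41213#10000) ltac:(vm_compute; reflexivity) ltac:(vm_compute; reflexivity)) as C1.
  apply (core e x y 2 ((Q2R (7071#5000)) + / (Q2R (7071#5000))) (Q2R (41213#10000)) (Q2R (7081#5000))); auto.
  - apply t_part2; auto.
  - apply s_part0; auto; qlra.
  - qlra.
  - qlra.
  - qlra.
Qed.

Lemma seg1 (e x y : R) : (Q2R (41#100)) <= e -> e <= (Q2R (881#1000)) -> 0 < e -> 0 < x -> 0 < y ->
  exp (- x) + x - 1 = e -> exp y - y - 1 = e -> forall beta,
  (sqrt e / (1 - exp (- x)) + (1 - exp (- x)) / sqrt e + (exp y - 1) / sqrt e + sqrt e / (exp y - 1)) / 2 <= beta ->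
  beta ^ 2 - ln (4 * beta ^ 2) - (1 + e) > 0.
Proof. intros H1 H2 He Hx Hy Ex Ey.
  pose proof (exp_ge_Q 22 (14827#10000) (11011#2500) ltac:(vm_compute; reflexivity) ltac:(vm_compute; reflexivity)) as C1.
  apply (core e x y 2 ((Q2R (3739#2000)) + / (Q2R (3739#2000))) (Q2R (11011#2500)) (Q2R (14827#10000))); auto.
  - apply t_part2; auto.
  - pose proof (exp_ge_Q 22 (787#1000) (2196796141#1000000000) ltac:(vm_compute; reflexivity) ltac:(vm_compute; reflexivity)) as Y1.
    pose proof (exp_le_Q 22 (787#1000) (137299759#62500000) ltac:(vm_compute; reflexivity) ltac:(vm_compute; reflexivity) ltac:(vm_compute; reflexivity)) as Y2.
    apply (s_part y e (Q2R (787#1000)) (Q2R (3739#2000)) He Hy); auto.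
    + qlra.
    + apply (n2_help (Q2R (787#1000)) e (Q2R (137299759#62500000))); auto; qlra.
    + apply (n4_help (Q2R (787#1000)) (Q2R (3739#2000)) (Q2R (2196796141#1000000000)) (Q2R (137299759#62500000))); auto; try qlra. intros v Hv. clear - Hv. qnra.
    + qlra.
  - qlra.
  - qlra.
  - qlra.
Qed.

Lemma seg2 (e x y : R) : (Q2R (881#1000)) <= e -> e <= (Q2R (1223#1000)) -> 0 < e -> 0 < x -> 0 < y ->
  exp (- x) + x - 1 = e -> exp y - y - 1 = e -> forall beta,
  (sqrt e / (1 - exp (- x)) + (1 - exp (- x)) / sqrt e + (exp y - 1) / sqrt e + sqrt e / (exp y - 1)) / 2 <= beta ->
  beta ^ 2 - ln (4 * beta ^ 2) - (1 + e) > 0.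
Proof. intros H1 H2 He Hx Hy Ex Ey.
  pose proof (exp_ge_Q 22 (953#625) (22969#5000) ltac:(vm_compute; reflexivity) ltac:(vm_compute; reflexivity)) as C1.
  apply (core e x y ((Q2R (1741#2000)) + / (Q2R (1741#2000))) ((Q2R (20979#10000)) + / (Q2R (20979#10000))) (Q2R (22969#5000)) (Q2R (953#625))); auto.
  - pose proof (exp_ge_Q 22 (16977#10000) (5461371779#1000000000) ltac:(vm_compute; reflexivity) ltac:(vm_compute; reflexivity)) as X1.
    pose proof (exp_le_Q 22 (16977#10000) (2730685891#500000000) ltac:(vm_compute; reflexivity) ltac:(vm_compute; reflexivity) ltac:(vm_compute; reflexivity)) as X2.
    apply (t_part x e (Q2R (16977#10000)) (Q2R (1741#2000)) He Hx); auto.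
    + qlra.
    + apply (n1_help (Q2R (16977#10000)) e (Q2R (5461371779#1000000000))); auto; qlra.
    + apply (n3_help (Q2R (16977#10000)) (Q2R (1741#2000)) (Q2R (5461371779#1000000000)) (Q2R (2730685891#500000000))); auto; try qlra. intros w Hw. clear - Hw. qnra.
    + qlra.
  - pose proof (exp_ge_Q 22 (5441#5000) (2968925193#1000000000) ltac:(vm_compute; reflexivity) ltac:(vm_compute; reflexivity)) as Y1.
    pose proof (exp_le_Q 22 (5441#5000) (742231299#250000000) ltac:(vm_compute; reflexivity) ltac:(vm_compute; reflexivity) ltac:(vm_compute; reflexivity)) as Y2.
    apply (s_part y e (Q2R (5441#5000)) (Q2R (20979#10000)) He Hy); auto.
    + qlra.
    + apply (n2_help (Q2R (5441#5000)) e (Q2R (742231299#250000000))); auto; qlra.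
    + apply (n4_help (Q2R (5441#5000)) (Q2R (20979#10000)) (Q2R (2968925193#1000000000)) (Q2R (742231299#250000000))); auto; try qlra. intros v Hv. clear - Hv. qnra.
    + qlra.
  - qlra.
  - qlra.
  - qlra.
Qed.

Lemma seg3 (e x y : R) : (Q2R (1223#1000)) <= e -> e <= (Q2R (297#200)) -> 0 < e -> 0 < x -> 0 < y ->
  exp (- x) + x - 1 = e -> exp y - y - 1 = e -> forall beta,
  (sqrt e / (1 - exp (- x)) + (1 - exp (- x)) / sqrt e + (exp y - 1) / sqrt e + sqrt e / (exp y - 1)) / 2 <= beta ->
  beta ^ 2 - ln (4 * beta ^ 2) - (1 + e) > 0.
Proof. intros H1 H2 He Hx Hy Ex Ey.
  pose proof (exp_ge_Q 22 (15543#10000) (47317#10000) ltac:(vm_compute; reflexivity) ltac:(vm_compute; reflexivity)) as C1.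
  apply (core e x y ((Q2R (7937#10000)) + / (Q2R (7937#10000))) ((Q2R (2787#1250)) + / (Q2R (2787#1250))) (Q2R (47317#10000)) (Q2R (15543#10000))); auto.
  - pose proof (exp_ge_Q 22 (5251#2500) (1021179629#125000000) ltac:(vm_compute; reflexivity) ltac:(vm_compute; reflexivity)) as X1.
    pose proof (exp_le_Q 22 (5251#2500) (1633887407#200000000) ltac:(vm_compute; reflexivity) ltac:(vm_compute; reflexivity) ltac:(vm_compute; reflexivity)) as X2.
    apply (t_part x e (Q2R (5251#2500)) (Q2R (7937#10000)) He Hx); auto.
    + qlra.
    + apply (n1_help (Q2R (5251#2500)) e (Q2R (1021179629#125000000))); auto; qlra.
    + apply (n3_help (Q2R (5251#2500)) (Q2R (7937#10000)) (Q2R (1021179629#125000000)) (Q2R (1633887407#200000000))); auto; try qlra. intros w Hw. clear - Hw. qnra.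
    + qlra.
  - pose proof (exp_ge_Q 22 (3107#2500) (173265137#50000000) ltac:(vm_compute; reflexivity) ltac:(vm_compute; reflexivity)) as Y1.
    pose proof (exp_le_Q 22 (3107#2500) (3465302743#1000000000) ltac:(vm_compute; reflexivity) ltac:(vm_compute; reflexivity) ltac:(vm_compute; reflexivity)) as Y2.
    apply (s_part y e (Q2R (3107#2500)) (Q2R (2787#1250)) He Hy); auto.
    + qlra.
    + apply (n2_help (Q2R (3107#2500)) e (Q2R (3465302743#1000000000))); auto; qlra.
    + apply (n4_help (Q2R (3107#2500)) (Q2R (2787#1250)) (Q2R (173265137#50000000)) (Q2R (3465302743#1000000000))); auto; try qlra. intros v Hv. clear - Hv. qnra.
    + qlra.
  - qlra.
  - qlra.
  - qlra.
Qed.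

Lemma seg4 (e x y : R) : (Q2R (297#200)) <= e -> e <= (Q2R (847#500)) -> 0 < e -> 0 < x -> 0 < y ->
  exp (- x) + x - 1 = e -> exp y - y - 1 = e -> forall beta,
  (sqrt e / (1 - exp (- x)) + (1 - exp (- x)) / sqrt e + (exp y - 1) / sqrt e + sqrt e / (exp y - 1)) / 2 <= beta ->
  beta ^ 2 - ln (4 * beta ^ 2) - (1 + e) > 0.
Proof. intros H1 H2 He Hx Hy Ex Ey.
  pose proof (exp_ge_Q 22 (3941#2500) (24187#5000) ltac:(vm_compute; reflexivity) ltac:(vm_compute; reflexivity)) as C1.
  apply (core e x y ((Q2R (3729#5000)) + / (Q2R (3729#5000))) ((Q2R (23197#10000)) + / (Q2R (23197#10000))) (Q2R (24187#5000)) (Q2R (3941#2500))); auto.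
  - pose proof (exp_ge_Q 22 (11967#5000) (2737665743#250000000) ltac:(vm_compute; reflexivity) ltac:(vm_compute; reflexivity)) as X1.
    pose proof (exp_le_Q 22 (11967#5000) (438026519#40000000) ltac:(vm_compute; reflexivity) ltac:(vm_compute; reflexivity) ltac:(vm_compute; reflexivity)) as X2.
    apply (t_part x e (Q2R (11967#5000)) (Q2R (3729#5000)) He Hx); auto.
    + qlra.
    + apply (n1_help (Q2R (11967#5000)) e (Q2R (2737665743#250000000))); auto; qlra.
    + apply (n3_help (Q2R (11967#5000)) (Q2R (3729#5000)) (Q2R (2737665743#250000000)) (Q2R (438026519#40000000))); auto; try qlra. intros w Hw. clear - Hw. qnra.
    + qlra.
  - pose proof (exp_ge_Q 22 (13419#10000) (478288323#125000000) ltac:(vm_compute; reflexivity) ltac:(vm_compute; reflexivity)) as Y1.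
    pose proof (exp_le_Q 22 (13419#10000) (3826306587#1000000000) ltac:(vm_compute; reflexivity) ltac:(vm_compute; reflexivity) ltac:(vm_compute; reflexivity)) as Y2.
    apply (s_part y e (Q2R (13419#10000)) (Q2R (23197#10000)) He Hy); auto.
    + qlra.
    + apply (n2_help (Q2R (13419#10000)) e (Q2R (3826306587#1000000000))); auto; qlra.
    + apply (n4_help (Q2R (13419#10000)) (Q2R (23197#10000)) (Q2R (478288323#125000000)) (Q2R (3826306587#1000000000))); auto; try qlra. intros v Hv. clear - Hv. qnra.
    + qlra.
  - qlra.
  - qlra.
  - qlra.
Qed.

Lemma seg5 (e x y : R) : (Q2R (847#500)) <= e -> e <= (Q2R (233#125)) -> 0 < e -> 0 < x -> 0 < y ->
  exp (- x) + x - 1 = e -> exp y - y - 1 = e -> forall beta,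
  (sqrt e / (1 - exp (- x)) + (1 - exp (- x)) / sqrt e + (exp y - 1) / sqrt e + sqrt e / (exp y - 1)) / 2 <= beta ->
  beta ^ 2 - ln (4 * beta ^ 2) - (1 + e) > 0.
Proof. intros H1 H2 He Hx Hy Ex Ey.
  pose proof (exp_ge_Q 22 (15937#10000) (9843#2000) ltac:(vm_compute; reflexivity) ltac:(vm_compute; reflexivity)) as C1.
  apply (core e x y ((Q2R (3563#5000)) + / (Q2R (3563#5000))) ((Q2R (11933#5000)) + / (Q2R (11933#5000))) (Q2R (9843#2000)) (Q2R (15937#10000))); auto.
  - pose proof (exp_ge_Q 22 (2621#1000) (13749466177#1000000000) ltac:(vm_compute; reflexivity) ltac:(vm_compute; reflexivity)) as X1.
    pose proof (exp_le_Q 22 (2621#1000) (687473309#50000000) ltac:(vm_compute; reflexivity) ltac:(vm_compute; reflexivity) ltac:(vm_compute; reflexivity)) as X2.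
    apply (t_part x e (Q2R (2621#1000)) (Q2R (3563#5000)) He Hx); auto.
    + qlra.
    + apply (n1_help (Q2R (2621#1000)) e (Q2R (13749466177#1000000000))); auto; qlra.
    + apply (n3_help (Q2R (2621#1000)) (Q2R (3563#5000)) (Q2R (13749466177#1000000000)) (Q2R (687473309#50000000))); auto; try qlra. intros w Hw. clear - Hw. qnra.
    + qlra.
  - pose proof (exp_ge_Q 22 (3531#2500) (4105797501#1000000000) ltac:(vm_compute; reflexivity) ltac:(vm_compute; reflexivity)) as Y1.
    pose proof (exp_le_Q 22 (3531#2500) (32076543#7812500) ltac:(vm_compute; reflexivity) ltac:(vm_compute; reflexivity) ltac:(vm_compute; reflexivity)) as Y2.
    apply (s_part y e (Q2R (3531#2500)) (Q2R (11933#5000)) He Hy); auto.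
    + qlra.
    + apply (n2_help (Q2R (3531#2500)) e (Q2R (32076543#7812500))); auto; qlra.
    + apply (n4_help (Q2R (3531#2500)) (Q2R (11933#5000)) (Q2R (4105797501#1000000000)) (Q2R (32076543#7812500))); auto; try qlra. intros v Hv. clear - Hv. qnra.
    + qlra.
  - qlra.
  - qlra.
  - qlra.
Qed.

Lemma seg6 (e x y : R) : (Q2R (233#125)) <= e -> e <= (Q2R (1003#500)) -> 0 < e -> 0 < x -> 0 < y ->
  exp (- x) + x - 1 = e -> exp y - y - 1 = e -> forall beta,
  (sqrt e / (1 - exp (- x)) + (1 - exp (- x)) / sqrt e + (exp y - 1) / sqrt e + sqrt e / (exp y - 1)) / 2 <= beta ->
  beta ^ 2 - ln (4 * beta ^ 2) - (1 + e) > 0.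
Proof. intros H1 H2 He Hx Hy Ex Ey.
  pose proof (exp_ge_Q 22 (8037#5000) (6237#1250) ltac:(vm_compute; reflexivity) ltac:(vm_compute; reflexivity)) as C1.
  apply (core e x y ((Q2R (3441#5000)) + / (Q2R (3441#5000))) ((Q2R (24383#10000)) + / (Q2R (24383#10000))) (Q2R (6237#1250)) (Q2R (8037#5000))); auto.
  - pose proof (exp_ge_Q 22 (28031#10000) (16495704273#1000000000) ltac:(vm_compute; reflexivity) ltac:(vm_compute; reflexivity)) as X1.
    pose proof (exp_le_Q 22 (28031#10000) (4123926069#250000000) ltac:(vm_compute; reflexivity) ltac:(vm_compute; reflexivity) ltac:(vm_compute; reflexivity)) as X2.
    apply (t_part x e (Q2R (28031#10000)) (Q2R (3441#5000)) He Hx); auto.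
    + qlra.
    + apply (n1_help (Q2R (28031#10000)) e (Q2R (16495704273#1000000000))); auto; qlra.
    + apply (n3_help (Q2R (28031#10000)) (Q2R (3441#5000)) (Q2R (16495704273#1000000000)) (Q2R (4123926069#250000000))); auto; try qlra. intros w Hw. clear - Hw. qnra.
    + qlra.
  - pose proof (exp_ge_Q 22 (3663#2500) (2164204417#500000000) ltac:(vm_compute; reflexivity) ltac:(vm_compute; reflexivity)) as Y1.
    pose proof (exp_le_Q 22 (3663#2500) (4328408837#1000000000) ltac:(vm_compute; reflexivity) ltac:(vm_compute; reflexivity) ltac:(vm_compute; reflexivity)) as Y2.
    apply (s_part y e (Q2R (3663#2500)) (Q2R (24383#10000)) He Hy); auto.
    + qlra.
    + apply (n2_help (Q2R (3663#2500)) e (Q2R (4328408837#1000000000))); auto; qlra.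
    + apply (n4_help (Q2R (3663#2500)) (Q2R (24383#10000)) (Q2R (2164204417#500000000)) (Q2R (4328408837#1000000000))); auto; try qlra. intros v Hv. clear - Hv. qnra.
    + qlra.
  - qlra.
  - qlra.
  - qlra.
Qed.

Lemma seg7 (e x y : R) : (Q2R (1003#500)) <= e -> e <= (Q2R (1063#500)) -> 0 < e -> 0 < x -> 0 < y ->
  exp (- x) + x - 1 = e -> exp y - y - 1 = e -> forall beta,
  (sqrt e / (1 - exp (- x)) + (1 - exp (- x)) / sqrt e + (exp y - 1) / sqrt e + sqrt e / (exp y - 1)) / 2 <= beta ->
  beta ^ 2 - ln (4 * beta ^ 2) - (1 + e) > 0.
Proof. intros H1 H2 He Hx Hy Ex Ey.
  pose proof (exp_ge_Q 22 (4047#2500) (10093#2000) ltac:(vm_compute; reflexivity) ltac:(vm_compute; reflexivity)) as C1.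
  apply (core e x y ((Q2R (3347#5000)) + / (Q2R (3347#5000))) ((Q2R (24801#10000)) + / (Q2R (24801#10000))) (Q2R (10093#2000)) (Q2R (4047#2500))); auto.
  - pose proof (exp_ge_Q 22 (5907#2000) (766917669#40000000) ltac:(vm_compute; reflexivity) ltac:(vm_compute; reflexivity)) as X1.
    pose proof (exp_le_Q 22 (5907#2000) (599154429#31250000) ltac:(vm_compute; reflexivity) ltac:(vm_compute; reflexivity) ltac:(vm_compute; reflexivity)) as X2.
    apply (t_part x e (Q2R (5907#2000)) (Q2R (3347#5000)) He Hx); auto.
    + qlra.
    + apply (n1_help (Q2R (5907#2000)) e (Q2R (766917669#40000000))); auto; qlra.
    + apply (n3_help (Q2R (5907#2000)) (Q2R (3347#5000)) (Q2R (766917669#40000000)) (Q2R (599154429#31250000))); auto; try qlra. intros w Hw. clear - Hw. qnra.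
    + qlra.
  - pose proof (exp_ge_Q 22 (3767#2500) (2256134203#500000000) ltac:(vm_compute; reflexivity) ltac:(vm_compute; reflexivity)) as Y1.
    pose proof (exp_le_Q 22 (3767#2500) (4512268409#1000000000) ltac:(vm_compute; reflexivity) ltac:(vm_compute; reflexivity) ltac:(vm_compute; reflexivity)) as Y2.
    apply (s_part y e (Q2R (3767#2500)) (Q2R (24801#10000)) He Hy); auto.
    + qlra.
    + apply (n2_help (Q2R (3767#2500)) e (Q2R (4512268409#1000000000))); auto; qlra.
    + apply (n4_help (Q2R (3767#2500)) (Q2R (24801#10000)) (Q2R (2256134203#500000000)) (Q2R (4512268409#1000000000))); auto; try qlra. intros v Hv. clear - Hv. qnra.
    + qlra.
  - qlra.
  - qlra.
  - qlra.
Qed.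

Lemma seg8 (e x y : R) : (Q2R (1063#500)) <= e -> e <= (Q2R (2229#1000)) -> 0 < e -> 0 < x -> 0 < y ->
  exp (- x) + x - 1 = e -> exp y - y - 1 = e -> forall beta,
  (sqrt e / (1 - exp (- x)) + (1 - exp (- x)) / sqrt e + (exp y - 1) / sqrt e + sqrt e / (exp y - 1)) / 2 <= beta ->
  beta ^ 2 - ln (4 * beta ^ 2) - (1 + e) > 0.
Proof. intros H1 H2 He Hx Hy Ex Ey.
  pose proof (exp_ge_Q 22 (8141#5000) (10189#2000) ltac:(vm_compute; reflexivity) ltac:(vm_compute; reflexivity)) as C1.
  apply (core e x y ((Q2R (409#625)) + / (Q2R (409#625))) ((Q2R (25143#10000)) + / (Q2R (25143#10000))) (Q2R (10189#2000)) (Q2R (8141#5000))); auto.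
  - pose proof (exp_ge_Q 22 (30797#10000) (21751875853#1000000000) ltac:(vm_compute; reflexivity) ltac:(vm_compute; reflexivity)) as X1.
    pose proof (exp_le_Q 22 (30797#10000) (1359492241#62500000) ltac:(vm_compute; reflexivity) ltac:(vm_compute; reflexivity) ltac:(vm_compute; reflexivity)) as X2.
    apply (t_part x e (Q2R (30797#10000)) (Q2R (409#625)) He Hx); auto.
    + qlra.
    + apply (n1_help (Q2R (30797#10000)) e (Q2R (21751875853#1000000000))); auto; qlra.
    + apply (n3_help (Q2R (30797#10000)) (Q2R (409#625)) (Q2R (21751875853#1000000000)) (Q2R (1359492241#62500000))); auto; try qlra. intros w Hw. clear - Hw. qnra.
    + qlra.
  - pose proof (exp_ge_Q 22 (7701#5000) (4665523281#1000000000) ltac:(vm_compute; reflexivity) ltac:(vm_compute; reflexivity)) as Y1.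
    pose proof (exp_le_Q 22 (7701#5000) (1166380821#250000000) ltac:(vm_compute; reflexivity) ltac:(vm_compute; reflexivity) ltac:(vm_compute; reflexivity)) as Y2.
    apply (s_part y e (Q2R (7701#5000)) (Q2R (25143#10000)) He Hy); auto.
    + qlra.
    + apply (n2_help (Q2R (7701#5000)) e (Q2R (1166380821#250000000))); auto; qlra.
    + apply (n4_help (Q2R (7701#5000)) (Q2R (25143#10000)) (Q2R (4665523281#1000000000)) (Q2R (1166380821#250000000))); auto; try qlra. intros v Hv. clear - Hv. qnra.
    + qlra.
  - qlra.
  - qlra.
  - qlra.
Qed.

Lemma seg9 (e x y : R) : (Q2R (2229#1000)) <= e -> e <= (Q2R (2317#1000)) -> 0 < e -> 0 < x -> 0 < y ->
  exp (- x) + x - 1 = e -> exp y - y - 1 = e -> forall beta,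
  (sqrt e / (1 - exp (- x)) + (1 - exp (- x)) / sqrt e + (exp y - 1) / sqrt e + sqrt e / (exp y - 1)) / 2 <= beta ->
  beta ^ 2 - ln (4 * beta ^ 2) - (1 + e) > 0.
Proof. intros H1 H2 He Hx Hy Ex Ey.
  pose proof (exp_ge_Q 22 (8181#5000) (25677#5000) ltac:(vm_compute; reflexivity) ltac:(vm_compute; reflexivity)) as C1.
  apply (core e x y ((Q2R (6423#10000)) + / (Q2R (6423#10000))) ((Q2R (2543#1000)) + / (Q2R (2543#1000))) (Q2R (25677#5000)) (Q2R (8181#5000))); auto.
  - pose proof (exp_ge_Q 22 (15937#5000) (12112679777#500000000) ltac:(vm_compute; reflexivity) ltac:(vm_compute; reflexivity)) as X1.
    pose proof (exp_le_Q 22 (15937#5000) (24225359557#1000000000) ltac:(vm_compute; reflexivity) ltac:(vm_compute; reflexivity) ltac:(vm_compute; reflexivity)) as X2.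
    apply (t_part x e (Q2R (15937#5000)) (Q2R (6423#10000)) He Hx); auto.
    + qlra.
    + apply (n1_help (Q2R (15937#5000)) e (Q2R (12112679777#500000000))); auto; qlra.
    + apply (n3_help (Q2R (15937#5000)) (Q2R (6423#10000)) (Q2R (12112679777#500000000)) (Q2R (24225359557#1000000000))); auto; try qlra. intros w Hw. clear - Hw. qnra.
    + qlra.
  - pose proof (exp_ge_Q 22 (7839#5000) (479608519#100000000) ltac:(vm_compute; reflexivity) ltac:(vm_compute; reflexivity)) as Y1.
    pose proof (exp_le_Q 22 (7839#5000) (4796085193#1000000000) ltac:(vm_compute; reflexivity) ltac:(vm_compute; reflexivity) ltac:(vm_compute; reflexivity)) as Y2.
    apply (s_part y e (Q2R (7839#5000)) (Q2R (2543#1000)) He Hy); auto.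
    + qlra.
    + apply (n2_help (Q2R (7839#5000)) e (Q2R (4796085193#1000000000))); auto; qlra.
    + apply (n4_help (Q2R (7839#5000)) (Q2R (2543#1000)) (Q2R (479608519#100000000)) (Q2R (4796085193#1000000000))); auto; try qlra. intros v Hv. clear - Hv. qnra.
    + qlra.
  - qlra.
  - qlra.
  - qlra.
Qed.

Lemma seg10 (e x y : R) : (Q2R (2317#1000)) <= e -> e <= (Q2R (1197#500)) -> 0 < e -> 0 < x -> 0 < y ->
  exp (- x) + x - 1 = e -> exp y - y - 1 = e -> forall beta,
  (sqrt e / (1 - exp (- x)) + (1 - exp (- x)) / sqrt e + (exp y - 1) / sqrt e + sqrt e / (exp y - 1)) / 2 <= beta ->
  beta ^ 2 - ln (4 * beta ^ 2) - (1 + e) > 0.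
Proof. intros H1 H2 He Hx Hy Ex Ey.
  pose proof (exp_ge_Q 22 (1643#1000) (51703#10000) ltac:(vm_compute; reflexivity) ltac:(vm_compute; reflexivity)) as C1.
  apply (core e x y ((Q2R (6323#10000)) + / (Q2R (6323#10000))) ((Q2R (2567#1000)) + / (Q2R (2567#1000))) (Q2R (51703#10000)) (Q2R (1643#1000))); auto.
  - pose proof (exp_ge_Q 22 (3279#1000) (26549210209#1000000000) ltac:(vm_compute; reflexivity) ltac:(vm_compute; reflexivity)) as X1.
    pose proof (exp_le_Q 22 (3279#1000) (6637302553#250000000) ltac:(vm_compute; reflexivity) ltac:(vm_compute; reflexivity) ltac:(vm_compute; reflexivity)) as X2.
    apply (t_part x e (Q2R (3279#1000)) (Q2R (6323#10000)) He Hx); auto.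
    + qlra.
    + apply (n1_help (Q2R (3279#1000)) e (Q2R (26549210209#1000000000))); auto; qlra.
    + apply (n3_help (Q2R (3279#1000)) (Q2R (6323#10000)) (Q2R (26549210209#1000000000)) (Q2R (6637302553#250000000))); auto; try qlra. intros w Hw. clear - Hw. qnra.
    + qlra.
  - pose proof (exp_ge_Q 22 (7953#5000) (4906692059#1000000000) ltac:(vm_compute; reflexivity) ltac:(vm_compute; reflexivity)) as Y1.
    pose proof (exp_le_Q 22 (7953#5000) (2453346031#500000000) ltac:(vm_compute; reflexivity) ltac:(vm_compute; reflexivity) ltac:(vm_compute; reflexivity)) as Y2.
    apply (s_part y e (Q2R (7953#5000)) (Q2R (2567#1000)) He Hy); auto.
    + qlra.
    + apply (n2_help (Q2R (7953#5000)) e (Q2R (2453346031#500000000))); auto; qlra.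
    + apply (n4_help (Q2R (7953#5000)) (Q2R (2567#1000)) (Q2R (4906692059#1000000000)) (Q2R (2453346031#500000000))); auto; try qlra. intros v Hv. clear - Hv. qnra.
    + qlra.
  - qlra.
  - qlra.
  - qlra.
Qed.

Lemma seg11 (e x y : R) : (Q2R (1197#500)) <= e -> e <= (Q2R (49#20)) -> 0 < e -> 0 < x -> 0 < y ->
  exp (- x) + x - 1 = e -> exp y - y - 1 = e -> forall beta,
  (sqrt e / (1 - exp (- x)) + (1 - exp (- x)) / sqrt e + (exp y - 1) / sqrt e + sqrt e / (exp y - 1)) / 2 <= beta ->
  beta ^ 2 - ln (4 * beta ^ 2) - (1 + e) > 0.
Proof. intros H1 H2 He Hx Hy Ex Ey.
  pose proof (exp_ge_Q 22 (16489#10000) (6501#1250) ltac:(vm_compute; reflexivity) ltac:(vm_compute; reflexivity)) as C1.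
  apply (core e x y ((Q2R (6239#10000)) + / (Q2R (6239#10000))) ((Q2R (25877#10000)) + / (Q2R (25877#10000))) (Q2R (6501#1250)) (Q2R (16489#10000))); auto.
  - pose proof (exp_ge_Q 22 (33589#10000) (28757540179#1000000000) ltac:(vm_compute; reflexivity) ltac:(vm_compute; reflexivity)) as X1.
    pose proof (exp_le_Q 22 (33589#10000) (14378770091#500000000) ltac:(vm_compute; reflexivity) ltac:(vm_compute; reflexivity) ltac:(vm_compute; reflexivity)) as X2.
    apply (t_part x e (Q2R (33589#10000)) (Q2R (6239#10000)) He Hx); auto.
    + qlra.
    + apply (n1_help (Q2R (33589#10000)) e (Q2R (28757540179#1000000000))); auto; qlra.
    + apply (n3_help (Q2R (33589#10000)) (Q2R (6239#10000)) (Q2R (28757540179#1000000000)) (Q2R (14378770091#500000000))); auto; try qlra. intros w Hw. clear - Hw. qnra.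
    + qlra.
  - pose proof (exp_ge_Q 22 (16101#10000) (1250827883#250000000) ltac:(vm_compute; reflexivity) ltac:(vm_compute; reflexivity)) as Y1.
    pose proof (exp_le_Q 22 (16101#10000) (1000662307#200000000) ltac:(vm_compute; reflexivity) ltac:(vm_compute; reflexivity) ltac:(vm_compute; reflexivity)) as Y2.
    apply (s_part y e (Q2R (16101#10000)) (Q2R (25877#10000)) He Hy); auto.
    + qlra.
    + apply (n2_help (Q2R (16101#10000)) e (Q2R (1000662307#200000000))); auto; qlra.
    + apply (n4_help (Q2R (16101#10000)) (Q2R (25877#10000)) (Q2R (1250827883#250000000)) (Q2R (1000662307#200000000))); auto; try qlra. intros v Hv. clear - Hv. qnra.
    + qlra.
  - qlra.
  - qlra.
  - qlra.
Qed.

Lemma partE (e x y : R) : 0 < e -> e <= (Q2R (49#20)) -> 0 < x -> 0 < y ->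
  exp (- x) + x - 1 = e -> exp y - y - 1 = e -> forall beta,
  (sqrt e / (1 - exp (- x)) + (1 - exp (- x)) / sqrt e + (exp y - 1) / sqrt e + sqrt e / (exp y - 1)) / 2 <= beta ->
  beta ^ 2 - ln (4 * beta ^ 2) - (1 + e) > 0.
Proof. intros He Hle Hx Hy Ex Ey.
  destruct (Rle_lt_dec e (Q2R (41#100))) as [?|?].
  { apply (seg0 e x y); auto; qlra. }
  destruct (Rle_lt_dec e (Q2R (881#1000))) as [?|?].
  { apply (seg1 e x y); auto; qlra. }
  destruct (Rle_lt_dec e (Q2R (1223#1000))) as [?|?].
  { apply (seg2 e x y); auto; qlra. }
  destruct (Rle_lt_dec e (Q2R (297#200))) as [?|?].
  { apply (seg3 e x y); auto; qlra. }
  destruct (Rle_lt_dec e (Q2R (847#500))) as [?|?].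
  { apply (seg4 e x y); auto; qlra. }
  destruct (Rle_lt_dec e (Q2R (233#125))) as [?|?].
  { apply (seg5 e x y); auto; qlra. }
  destruct (Rle_lt_dec e (Q2R (1003#500))) as [?|?].
  { apply (seg6 e x y); auto; qlra. }
  destruct (Rle_lt_dec e (Q2R (1063#500))) as [?|?].
  { apply (seg7 e x y); auto; qlra. }
  destruct (Rle_lt_dec e (Q2R (2229#1000))) as [?|?].
  { apply (seg8 e x y); auto; qlra. }
  destruct (Rle_lt_dec e (Q2R (2317#1000))) as [?|?].
  { apply (seg9 e x y); auto; qlra. }
  destruct (Rle_lt_dec e (Q2R (1197#500))) as [?|?].
  { apply (seg10 e x y); auto; qlra. }
  apply (seg11 e x y); auto; qlra.
Qed.

Lemma PI_ub : PI <= 3142/1000.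
Proof. destruct (PI_2_3_7_ineq 4) as [_ H].
  unfold tg_alt, PI_2_3_7_tg, Ratan_seq in H. simpl in H. lra. Qed.
Lemma PI_lb : 3141/1000 <= PI.
Proof. destruct (PI_2_3_7_ineq 4) as [H _].
  unfold tg_alt, PI_2_3_7_tg, Ratan_seq in H. simpl in H. lra. Qed.

Lemma sqrt2_bounds : 14142/10000 <= sqrt 2 <= 14143/10000.
Proof. pose proof (sqrt_pos 2). pose proof (sqrt_sqrt 2 ltac:(lra)). nra. Qed.

Lemma ln_ge_1minus z : 0 < z -> 1 - / z <= ln z.
Proof. intros Hz. pose proof (ln_le_sub1 (/ z) ltac:(apply Rinv_0_lt_compat; lra)).
  rewrite ln_Rinv in H by lra. lra. Qed.

Lemma ln2Va : 1645/1000 <= ln (2 * (2593/1000)).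
Proof. pose proof (exp_le_Q 22 (1645#1000) (5186#1000) ltac:(vm_compute; reflexivity) ltac:(vm_compute; reflexivity) ltac:(vm_compute; reflexivity)) as H.
  unfold Q2R in H; simpl Qnum in H; simpl Qden in H.
  replace (1645/1000) with (ln (exp (1645 * / 1000))) by (rewrite ln_exp; field).
  apply ln_le. apply exp_pos. lra. Qed.

Lemma Wderiv lambda f1 : 1 < f1 -> 0 < lambda ->
  let s := sqrt (f1 - 1) in let V := Vfun lambda f1 in let V' := lambda * (s + (f1 - 1) / (2 * s)) in
  Derive (Wfun lambda) f1 = 2 * V * V' - 2 * V' / V - 1.
Proof. intros Hf Hl s V V'.
  assert (Hs : 0 < s) by (apply sqrt_lt_R0; lra).
  assert (Hc : 0 < PI / sqrt 2) by (apply Rdiv_lt_0_compat; [apply PI_RGT_0| apply sqrt_lt_R0; lra]).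
  assert (HV : 0 < V).
  { unfold V, Vfun. fold s. assert (0 < f1 - 1) by lra. 
    assert (0 < lambda * ((f1 - 1) * s)) by (apply Rmult_lt_0_compat; nra). lra. }
  apply is_derive_unique. unfold V, Vfun in HV |- *. unfold Wfun, Vfun. auto_derive.
  - change (f1 + - (1)) with (f1 - 1). repeat split; try lra. 
    set (W := PI / sqrt 2 + lambda * ((f1 - 1) * sqrt (f1 - 1))) in *. nra.
  - change (f1 + - (1)) with (f1 - 1). unfold V'. fold s in HV |- *.
    set (W := PI / sqrt 2 + lambda * ((f1 - 1) * s)) in *. field. lra.
Qed.
Lemma caseA V e1 : 2220/1000 <= V -> V <= 2593/1000 -> 49/20 < e1 ->
  1 + e1 < V^2 - 2 * (1645/1000) - 2 + 2 * (2593/1000) / V -> False.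
Proof. intros. assert (0 < V) by lra.
  assert (2 * (2593/1000) / V * V = 2 * (2593/1000)) by (field; lra).
  assert (HH4 : V^3 - (2*(1645/1000) + 2) * V + 2 * (2593/1000) > (1 + e1) * V) by nra.
  nra. Qed.
Lemma caseB V c e1 : 2593/1000 < V -> c <= 3142/1000 / (14142/10000) -> 2 <= c ->
  3 * (V - c) * (V^2 - 1) < V * e1 -> e1 < V^2 - 2 * (1645/1000) - 3 + 2 * (2593/1000) / V -> False.
Proof. intros. assert (0 < V) by lra.
  assert (2 * (2593/1000) / V * V = 2 * (2593/1000)) by (field; lra).
  assert (HH5 : V * e1 < V^3 - (2*(1645/1000) + 3) * V + 2 * (2593/1000)) by nra.
  set (cU := 3142/1000 / (14142/10000)) in *.
  assert (HV2 : 0 < V^2 - 1) by nra.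
  assert (HH6 : 3 * (V - cU) * (V^2 - 1) <= 3 * (V - c) * (V^2 - 1)) by nra.
  assert (HcU : cU <= 2221755/1000000) by (unfold cU; lra).
  set (d := V - 2593/1000). assert (Hd : 0 < d) by (unfold d; lra).
  replace V with (2593/1000 + d) in * by (unfold d; ring).
  nra. Qed.

Lemma partD lambda f1 : 1 < f1 -> 0 < lambda -> Wfun lambda f1 > 0 -> Derive (Wfun lambda) f1 < 0 ->
  f1 - 1 <= 49/20.
Proof. intros Hf Hl HW HD. rewrite Wderiv in HD by auto. cbv zeta in HD.
  unfold Wfun in HW. unfold Vfun in *.
  set (s := sqrt (f1 - 1)) in *. set (e1 := f1 - 1) in *.
  assert (Hs : 0 < s) by (apply sqrt_lt_R0; unfold e1; lra).
  assert (Hss : s * s = e1) by (apply sqrt_sqrt; unfold e1; lra).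
  set (c := PI / sqrt 2) in *.
  pose proof PI_ub. pose proof PI_lb. pose proof sqrt2_bounds.
  assert (Hc2 : c * sqrt 2 = PI) by (unfold c; field; lra).
  assert (HcU : c <= 3142/1000 / (14142/10000)).
  { apply Rmult_le_reg_r with (sqrt 2). lra. rewrite Hc2.
    apply Rle_trans with (3142/1000). lra. 
    apply Rle_trans with (3142 / 1000 / (14142 / 10000) * (14142/10000)). right; field.
    apply Rmult_le_compat_l; lra. }
  assert (HcL : 2220/1000 <= c) by nra.
  set (V := c + lambda * (e1 * s)) in *.
  assert (HA : 0 < lambda * (e1 * s)) by (apply Rmult_lt_0_compat; auto; apply Rmult_lt_0_compat; unfold e1 in *; lra).
  assert (HV : c < V) by (unfold V; lra).
  assert (HV' : lambda * (s + e1 / (2 * s)) = 3 / 2 * lambda * s) by (field_simplify; [|lra]; rewrite <- Hss; field; lra).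
  rewrite HV' in HD.
  assert (Hln : 2 * (1645/1000) + 2 * (1 - 2593/1000 / V) <= ln (4 * V ^ 2)).
  { replace (4 * V ^ 2) with ((2 * (2593/1000)) * (V / (2593/1000)) * ((2 * (2593/1000)) * (V / (2593/1000)))) by (field; lra).
    rewrite ln_mult by (apply Rmult_lt_0_compat; apply Rmult_lt_0_compat || apply Rdiv_lt_0_compat; lra).
    rewrite ln_mult by (lra || (apply Rdiv_lt_0_compat; lra)).
    pose proof ln2Va. pose proof (ln_ge_1minus (V / (2593/1000)) ltac:(apply Rdiv_lt_0_compat; lra)).
    replace (/ (V / (2593/1000))) with (2593/1000 / V) in H3 by (field; lra). lra. }
  destruct (Rle_lt_dec e1 (49/20)) as [Hle|Hgt]; auto. exfalso.
  destruct (Rle_lt_dec V (2593/1000)) as [HVa|HVa].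
  - apply (caseA V e1); try lra. unfold e1 in *. lra.
  - apply (caseB V c e1); try lra.
    + (* 3 (V - c) (V^2 - 1) < V e1 from derivative *)
      assert (Hlam : V - c = lambda * (e1 * s)) by (unfold V; ring).
      assert (HVp : 0 < V) by lra.
      assert (H2 : 2 * V * (3 / 2 * lambda * s) - 2 * (3 / 2 * lambda * s) / V < 1) by lra.
      assert (H3 : 2 * V * (3 / 2 * lambda * s) * V - 2 * (3 / 2 * lambda * s) < V).
      { assert (2 * (3 / 2 * lambda * s) / V * V = 2 * (3 / 2 * lambda * s)) by (field; lra). nra. }
      assert (H4 : 3 * (lambda * s) * (V ^ 2 - 1) < V) by nra.
      rewrite Hlam. rewrite <- Hss. 
      assert (0 < s * s) by nra.
      replace (3 * (lambda * (s * s * s)) * (V ^ 2 - 1)) with (s * s * (3 * (lambda * s) * (V ^ 2 - 1))) by ring.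
      replace (V * (s * s)) with (s * s * V) by ring.
      apply Rmult_lt_compat_l; lra.
    + unfold e1 in *. lra.
Qed.

Theorem proposition2p7 (lambda f1 : R) :
  1 < f1 ->
  0 < lambda ->
  lambda < 2 * J f1 / (3 * (f1 - 1)) ->
  Wfun lambda f1 > 0 ->
  Derive (Wfun lambda) f1 < 0 ->
  forall f0 : R, 1 < f0 < f1 ->
    (beta f0) ^ 2 - ln (4 * (beta f0) ^ 2) - f0 > 0.
Proof.
  intros Hf1 Hl _ HW HD f0 [Hf0 Hf01].
  pose proof (partD lambda f1 Hf1 Hl HW HD) as He1.
  destruct (phi_lo_spec f0 Hf0) as [Hlo Elo]. destruct (phi_hi_spec f0 Hf0) as [Hhi Ehi].
  pose proof (beta_ge f0 (phi_lo f0) (phi_hi f0) Hf0 Hlo Hhi Elo Ehi) as HB.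
  fold (beta f0) in HB.
  set (lo := phi_lo f0) in *. set (hi := phi_hi f0) in *.
  replace f0 with (1 + (f0 - 1)) at 3 by ring.
  apply (partE (f0 - 1) (- lo) hi); try lra.
  - rewrite Ropp_involutive. lra.
  - rewrite Ropp_involutive. unfold Fv in HB. exact HB.
Qed.
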